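(* Let $r\ge 3$ be an integer and for $k\in\mathbb Z_{\ge0}$ put $q_k=\frac{1+r^k(r-2)}{r-1}$. Then for every $n\ge1$, the set $S=\{t\cdot(1,r,r^2,\dots,r^{n-1}) : t\in\mathbb Z_{q_n}\}\subseteq\mathbb Z_{q_n}^n$ (arithmetic modulo $q_n$) is an independent set of size $q_n$ in $C_{q_{n-1},q_n}^{\boxtimes n}$.
   Context: For positive integers $q,d$ with $q\ge 2d$, the circular graph $C_{d,q}$ has vertex set $\mathbb Z_q$, two distinct vertices $x,y$ being adjacent iff $\min\{|x-y|,q-|x-y|\}<d$ (viewing $x,y$ as integers in $\{0,\dots,q-1\}$). For a graph $G=(V,E)$, $G^{\boxtimes n}$ has vertex set $V^n$, distinct $(u_i)$, $(v_i)$ adjacent iff for every $i$ either $u_i=v_i$ or $u_iv_i\in E$. An independent set is a set of pairwise non-adjacent vertices. *)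

(* Defs.v *)
From mathcomp Require Import all_boot.
Set Implicit Arguments. Unset Strict Implicit. Unset Printing Implicit Defensive.

(* q_k = (1 + r^k (r-2)) / (r-1); the division is exact for r >= 2. *)
Definition qk (r k : nat) : nat := (1 + r ^ k * (r - 2)) %/ (r - 1).

Definition ndist (x y : nat) : nat := (x - y) + (y - x).

(* circular graph C_{d,q} on Z_q = 'I_q (vertices viewed as 0..q-1) *)
Definition circ_adj (q d : nat) : rel 'I_q :=
  fun x y => (x != y) && (minn (ndist x y) (q - ndist x y) < d).

Definition strong_adj (T : finType) (e : rel T) (n : nat) : rel {ffun 'I_n -> T} :=
  fun u v => (u != v) && [forall i, (u i == v i) || e (u i) (v i)].

Definition independent (T : finType) (e : rel T) (S : {set T}) : Prop :=
  forall u v, u \in S -> v \in S -> ~~ e u v.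

Definition diag_set (q r n : nat) : {set {ffun 'I_n -> 'I_q}} :=
  [set f : {ffun 'I_n -> 'I_q} | [exists t : 'I_q, [forall i : 'I_n, (f i : nat) == (t * r ^ i) %% q]]].

Arguments circ_adj q d : clear implicits.
Arguments diag_set q r n : clear implicits.
Arguments strong_adj {T} e n.

(* Main.v *)
Require Import Defs.
From Stdlib Require Import ZArith Lia.
From mathcomp Require Import all_boot zify.

Section Core.
Local Open Scope Z_scope.
Definition inv (r m y : Z) := (0 < y /\ 0 <= m /\ exists c, m = c*(r-1)) \/ (y < 0 /\ 1 <= m /\ exists c, m = c*(r-1)+1).

Ltac mle := first [apply Z.mul_le_mono_nonneg_l; lia | apply Z.mul_le_mono_nonneg_r; lia | apply Z.mul_nonneg_nonneg; lia | apply Z.mul_nonpos_nonneg; lia | apply Z.mul_nonneg_nonpos; lia | apply Z.mul_nonpos_nonpos; lia | nia].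

Lemma step (r Q d m y m' y' : Z) : 3 <= r -> Q = r*d - 1 -> 1 <= d ->
  r*(m*Q+y) = m'*Q + y' -> -d<y<d -> -d<y'<d -> inv r m y -> inv r m' y'.
Proof.
  intros Hr HQ Hd E Hy Hy' Hi.
  set (k := m' - r*m).
  assert (Ek : r*y - y' = k*Q) by (unfold k; rewrite Z.mul_sub_distr_r; lia).
  assert (Em : m' = r*m + k) by (unfold k; lia). clearbody k.
  assert (H3 : 0 <= (r-3)*d) by mle.
  assert (Hry1 : r*y <= r*(d-1)) by mle.
  assert (Hry2 : r*(-(d-1)) <= r*y) by mle.
  assert (Hk : -1 <= k <= 1).
  { split.
    - destruct (Z_lt_le_dec k (-1)) as [h|h]; [|lia].
      assert ((k+2)*Q <= 0) by mle. lia.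
    - destruct (Z_lt_le_dec 1 k) as [h|h]; [|lia].
      assert (0 <= (k-2)*Q) by mle. lia. }
  assert (k = -1 \/ k = 0 \/ k = 1) as [-> | [-> | ->]] by lia;
  destruct Hi as [[y0 [m0 [c Hc]]]|[y0 [m1 [c Hc]]]].
  - assert (Hry3 : r*1 <= r*y) by mle. lia.
  - left. split; [lia|]. split; [assert (r*1 <= r*m) by mle; lia|]. exists (r*c+1). subst. ring.
  - left. split; [lia|]. split; [assert (0 <= r*m) by mle; lia|]. exists (r*c). subst. ring.
  - right. split; [lia|]. split; [assert (r*1 <= r*m) by mle; lia|]. exists (r*c+1). subst. ring.
  - right. split; [lia|]. split; [assert (0 <= r*m) by mle; lia|]. exists (r*c). subst. ring.
  - assert (Hry3 : r*y <= r*(-1)) by mle. lia.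
Qed.

Lemma final (r Q d P m y x : Z) : 3 <= r -> 1 <= P -> (r-1)*Q = 1 + r*P*(r-2) ->
  (r-1)*d = 1 + P*(r-2) -> 0 < x < d -> x*P = m*Q + y -> -d<y<d -> inv r m y -> False.
Proof.
  intros Hr HP HQ Hd Hx E Hy Hi.
  assert (Hrd : r*((r-1)*d) = r*(1+P*(r-2))) by (rewrite Hd; ring).
  assert (HQd : Q = r*d - 1).
  { assert (Z0 : (r-1)*(Q-(r*d-1)) = 0) by lia.
    apply Z.mul_eq_0 in Z0. lia. }
  assert (Hd1 : 1 <= d).
  { destruct (Z_lt_le_dec 0 d) as [h|h]; [lia|].
    assert ((r-1)*d <= 0) by mle. assert (0 <= P*(r-2)) by mle. lia. }
  assert (HPQ : P*Q = r*d*P - P) by (rewrite HQd; ring).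
  assert (Hm : m < P).
  { destruct (Z_lt_le_dec m P) as [h|h]; [lia|].
    assert (0 <= (m-P)*Q) by mle.
    assert (0 <= (d-1-x)*P) by mle.
    assert (0 <= (r-3)*d*P) by (apply Z.mul_nonneg_nonneg; [mle|lia]).
    assert (0 <= d*(P-1)) by mle. lia. }
  set (A := (r-1)*x - m*r*(r-2)).
  assert (E1 : (r-1)*(x*P) = (r-1)*(m*Q+y)) by (rewrite E; ring).
  assert (E2 : m*((r-1)*Q) = m*(1+r*P*(r-2))) by (rewrite HQ; ring).
  assert (EA : P*A = (r-1)*y + m) by (unfold A; lia).
  destruct Hi as [[y0 [m0 [c Hc]]]|[y0 [m1 [c Hc]]]].
  - assert (HA : A = (r-1)*(x - c*r*(r-2))) by (unfold A; rewrite Hc; ring).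
    clearbody A.
    assert (1 <= A).
    { destruct (Z_lt_le_dec 0 A) as [h|h]; [lia|].
      assert (P*A <= 0) by mle. assert ((r-1)*1 <= (r-1)*y) by mle. lia. }
    assert (A < r-1).
    { destruct (Z_lt_le_dec A (r-1)) as [h|h]; [lia|].
      assert (0 <= (A-(r-1))*P) by mle. assert ((r-1)*y <= (r-1)*(d-1)) by mle. lia. }
    set (T := x - c*r*(r-2)) in *. clearbody T.
    destruct (Z_lt_le_dec 0 T) as [h|h].
    + assert ((r-1)*1 <= (r-1)*T) by mle. lia.
    + assert ((r-1)*T <= 0) by mle. lia.
  - assert (HA : A = (r-1)*(x - c*r*(r-2) - (r-1)) + 1) by (unfold A; rewrite Hc; ring).
    clearbody A.
    assert (A <= 0).
    { destruct (Z_lt_le_dec 0 A) as [h|h]; [|lia].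
      assert (0 <= (A-1)*P) by mle. assert ((r-1)*y <= (r-1)*(-1)) by mle. lia. }
    assert (-(r-2) < A).
    { destruct (Z_lt_le_dec (-(r-2)) A) as [h|h]; [lia|].
      assert ((A+(r-2))*P <= 0) by mle. assert ((r-1)*(-(d-1)) <= (r-1)*y) by mle. lia. }
    set (T := x - c*r*(r-2) - (r-1)) in *. clearbody T.
    destruct (Z_lt_le_dec T 0) as [h|h].
    + assert ((r-1)*T <= (r-1)*(-1)) by mle. lia.
    + assert (0 <= (r-1)*T) by mle. lia.
Qed.

Lemma core_pos (r Q d x : Z) (nn : nat) (pw : nat -> Z) :
  3 <= r -> pw 0%nat = 1 -> (forall i, pw (S i) = r * pw i) ->
  (r-1)*Q = 1 + r*pw nn*(r-2) -> (r-1)*d = 1 + pw nn*(r-2) ->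
  0 < x < d ->
  (forall i, (i <= nn)%nat -> exists m y, x * pw i = m*Q + y /\ -d < y < d) -> False.
Proof.
  intros Hr H0 HS HQ Hd Hx H.
  assert (Hpw : forall i, 1 <= pw i).
  { induction i as [|i IH]; [lia|]. rewrite HS. assert (r*1 <= r*pw i) by mle. lia. }
  assert (Hrd : r*((r-1)*d) = r*(1+pw nn*(r-2))) by (rewrite Hd; ring).
  assert (HQd : Q = r*d - 1).
  { assert (Z0 : (r-1)*(Q-(r*d-1)) = 0) by lia.
    apply Z.mul_eq_0 in Z0. lia. }
  assert (Hd1 : 1 <= d) by lia.
  assert (Inv : forall i, (i <= nn)%nat -> exists m y, x * pw i = m*Q + y /\ -d < y < d /\ inv r m y).
  { induction i as [|i IH]; intros Hi.
    - exists 0, x. rewrite H0. split; [ring|]. split; [lia|]. left. split; [lia|]. split; [lia|]. exists 0; ring.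
    - destruct IH as [m [y [E1 [Hy Hinv]]]]; [lia|].
      destruct (H (S i) Hi) as [m' [y' [E2 Hy']]].
      exists m', y'. split; [exact E2|]. split; [exact Hy'|].
      apply (step r Q d m y m' y'); try assumption.
      rewrite <- E1, <- E2, HS. ring. }
  destruct (Inv nn) as [m [y [E [Hy Hinv]]]]; [lia|].
  apply (final r Q d (pw nn) m y x); try assumption. apply Hpw.
Qed.

Lemma core (r Q d X : Z) (nn : nat) (pw : nat -> Z) :
  3 <= r -> pw 0%nat = 1 -> (forall i, pw (S i) = r * pw i) ->
  (r-1)*Q = 1 + r*pw nn*(r-2) -> (r-1)*d = 1 + pw nn*(r-2) ->
  X <> 0 -> -Q < X < Q ->
  (forall i, (i <= nn)%nat -> exists m y, X * pw i = m*Q + y /\ -d < y < d) -> False.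
Proof.
  intros Hr H0 HS HQ Hd HX0 HXQ H.
  destruct (H 0%nat) as [m0 [y0 [E0 Hy0]]]; [lia|].
  rewrite H0 in E0. assert (E0x : X = m0*Q + y0) by lia.
  assert (y0 <> 0).
  { intro. subst y0. destruct (Z_lt_le_dec 0 m0) as [h|h].
    - assert (1*Q <= m0*Q) by mle. lia.
    - destruct (Z.eq_dec m0 0) as [->|h']; [lia|].
      assert (m0*Q <= -1*Q) by mle. lia. }
  destruct (Z_lt_le_dec 0 y0) as [hp|hn].
  - apply (core_pos r Q d y0 nn pw); try assumption; [lia|].
    intros i Hi. destruct (H i Hi) as [m [y [E Hy]]].
    exists (m - m0 * pw i), y. split; [|exact Hy].
    assert (X * pw i = m0*Q*pw i + y0 * pw i) by (rewrite E0x; ring). lia.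
  - apply (core_pos r Q d (-y0) nn pw); try assumption; [lia|].
    intros i Hi. destruct (H i Hi) as [m [y [E Hy]]].
    exists (- m + m0 * pw i), (-y). split; [|lia].
    assert (X * pw i = m0*Q*pw i + y0 * pw i) by (rewrite E0x; ring). lia.
Qed.
End Core.

Lemma qk_eq (r k : nat) : 2 <= r -> (r-1) * qk r k = 1 + r^k*(r-2).
Proof.
  move=> Hr.
  have [w Hw] : exists w, 1 + r^k*(r-2) = (r-1) * w.
    elim: k => [|k [w IH]]; first by exists 1; rewrite expn0; lia.
    exists (r*w - 1). rewrite expnS.
    have : r * (1 + r^k*(r-2)) = r * ((r-1)*w) by rewrite IH.
    nia.
  rewrite /qk Hw mulKn //; lia.
Qed.

Theorem theorem9p3 (r n : nat) : 3 <= r -> 1 <= n ->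
  independent (strong_adj (circ_adj (qk r n) (qk r n.-1)) n) (diag_set (qk r n) r n)
  /\ #|diag_set (qk r n) r n| = qk r n.
Proof.
  move=> Hr Hn.
  have Hr2 : 2 <= r by lia.
  have HQe := @qk_eq r n Hr2. have Hde := @qk_eq r n.-1 Hr2.
  have Hn' : n = n.-1.+1 by lia.
  have Hpn : r^n = r * r^n.-1 by rewrite {1}Hn' expnS.
  have HQ0 : 0 < qk r n.
    case: (posnP (qk r n)) => [H0|//]. by move: HQe; rewrite H0 muln0 add1n.
  have Hd0 : 0 < qk r n.-1.
    case: (posnP (qk r n.-1)) => [H0|//]. by move: Hde; rewrite H0 muln0 add1n.
  split.
  - move=> u v Hu Hv. apply/negP => /andP [Hneq /forallP Hall].
    move: Hu Hv; rewrite !inE => /existsP [t /forallP Ht] /existsP [s /forallP Hs].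
    have Hts : (t : nat) != s.
      apply: contraNneq Hneq => Ets. apply/eqP/ffunP => i. apply: val_inj => /=.
      by rewrite (eqP (Ht i)) (eqP (Hs i)) Ets.
    have Htl := ltn_ord t. have Hsl := ltn_ord s.
    apply: (core (Z.of_nat r) (Z.of_nat (qk r n)) (Z.of_nat (qk r n.-1))
                 (Z.of_nat t - Z.of_nat s) n.-1 (fun i => Z.of_nat (r ^ i))).
    + lia.
    + by rewrite expn0.
    + move=> i. rewrite expnS. lia.
    + lia.
    + lia.
    + lia.
    + lia.
    + move=> i Hi. cbv beta.
      have Hi' : i < n by lia.
      have := Hall (Ordinal Hi'). rewrite /circ_adj /ndist -!val_eqE /= (eqP (Ht _)) (eqP (Hs _)) /=.
      have Ea := divn_eq (t * r^i) (qk r n). have Eb := divn_eq (s * r^i) (qk r n).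
      have Ha := ltn_pmod (t * r^i) HQ0. have Hb := ltn_pmod (s * r^i) HQ0.
      move: Ea Eb Ha Hb.
      move: (t * r ^ i %% qk r n) (s * r ^ i %% qk r n) (t * r ^ i %/ qk r n) (s * r ^ i %/ qk r n)
        => a b al be Ea Eb Ha Hb.
      have EZ : ((Z.of_nat t - Z.of_nat s) * Z.of_nat (r^i) =
                 (Z.of_nat al - Z.of_nat be) * Z.of_nat (qk r n) + (Z.of_nat a - Z.of_nat b))%Z.
        lia.
      case/orP => [/eqP Hab | /andP [_ Hmin]].
      * exists (Z.of_nat al - Z.of_nat be)%Z, 0%Z. lia.
      * case: (ltnP (a - b + (b - a)) (qk r n.-1)) => Hc.
        -- exists (Z.of_nat al - Z.of_nat be)%Z, (Z.of_nat a - Z.of_nat b)%Z. lia.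
        -- case: (leqP b a) => Hab.
           ++ exists (Z.of_nat al - Z.of_nat be + 1)%Z, (Z.of_nat a - Z.of_nat b - Z.of_nat (qk r n))%Z. lia.
           ++ exists (Z.of_nat al - Z.of_nat be - 1)%Z, (Z.of_nat a - Z.of_nat b + Z.of_nat (qk r n))%Z. lia.
  - pose f (t : 'I_(qk r n)) : {ffun 'I_n -> 'I_(qk r n)} :=
      [ffun i : 'I_n => Ordinal (ltn_pmod (t * r^i) HQ0)].
    have -> : diag_set (qk r n) r n = f @: setT.
      apply/setP => g. rewrite inE. apply/existsP/imsetP.
      + move=> [t /forallP Ht]. exists t; first by [].
        apply/ffunP => i. rewrite ffunE. apply: val_inj => /=. exact: (eqP (Ht i)).
      + move=> [t _ ->]. exists t. apply/forallP => i. by rewrite ffunE /=.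
    rewrite card_imset ?cardsT ?card_ord //.
    move=> t s Efs.
    have Hn0 : 0 < n by lia.
    have := congr1 (fun g : {ffun 'I_n -> 'I_(qk r n)} => val (g (Ordinal Hn0))) Efs.
    rewrite !ffunE /= expn0 !muln1 !modn_small //. move=> E. exact: val_inj.
Qed.
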